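(* Let $a=a_0+a_1e_1+a_2e_2+a_3e_3$ and $b=b_0+b_1e_1+b_2e_2+b_3e_3$ be nonzero elements of $C\ell_2$, let $U=\mathrm{diag}(1,-1,-1,-1)$ and $W(a,b)=L(a)-R(b)U$. Then the eigenvalues of $W(a,b)$ are $$\lambda_{1,2}=a_0\pm\sqrt{G(a)+H_b},\qquad \lambda_{3,4}=a_0+b_0\pm\sqrt{G(a)+G(b)+2(-a_1b_1-a_2b_2+a_3b_3)},$$ and $$\det(W(a,b))=(H_a-H_b)\big(H_a+H_b+2(a_0b_0+a_1b_1+a_2b_2-a_3b_3)\big)=(H_a-H_b)H_{\bar a+b}.$$
   Context: $C\ell_2$ is the 4-dimensional real associative algebra with basis $1,e_1,e_2,e_3$ and multiplication $e_1^2=e_2^2=1$, $e_3^2=-1$, $e_1e_2=e_3=-e_2e_1$, $e_1e_3=e_2=-e_3e_1$, $e_3e_2=e_1=-e_2e_3$. For $a=a_0+a_1e_1+a_2e_2+a_3e_3$ ($a_i\in\mathbb{R}$): $\bar a=a_0-a_1e_1-a_2e_2-a_3e_3$, $H_a=a_0^2-a_1^2-a_2^2+a_3^2$, $G(a)=a_1^2+a_2^2-a_3^2$, $$L(a)=\begin{pmatrix} a_0&a_1&a_2&-a_3\\ a_1&a_0&a_3&-a_2\\ a_2&-a_3&a_0&a_1\\ a_3&-a_2&a_1&a_0\end{pmatrix},\qquad R(a)=\begin{pmatrix} a_0&a_1&a_2&-a_3\\ a_1&a_0&-a_3&a_2\\ a_2&a_3&a_0&-a_1\\ a_3&a_2&-a_1&a_0\end{pmatrix}.$$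 (Square roots are complex when the radicand is negative.) The equation $ax=\bar x b$ is equivalent to $W(a,b)\overrightarrow{x}=0$, with $\overrightarrow{x}=(x_0,x_1,x_2,x_3)^T$. *)

(* Defs.v *)
From HB Require Import structures.
From mathcomp Require Import all_boot all_order all_algebra.
From mathcomp Require Export complex.
Set Implicit Arguments. Unset Strict Implicit. Unset Printing Implicit Defensive.
Import Order.TTheory GRing.Theory Num.Theory.
Local Open Scope ring_scope.

(* An element a = a0 + a1 e1 + a2 e2 + a3 e3 of Cl_2 is represented by its
   coordinate vector, a function 'I_4 -> R; a`0 .. a`3 below. *)
Definition Cl2 (R : rcfType) := 'I_4 -> R.

Section Cl2Defs.
Variable R : rcfType.
Implicit Types a b : Cl2 R.

Definition c0 a := a (@Ordinal 4 0 isT).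
Definition c1 a := a (@Ordinal 4 1 isT).
Definition c2 a := a (@Ordinal 4 2 isT).
Definition c3 a := a (@Ordinal 4 3 isT).

Definition cl2_nonzero a := exists i, a i != 0.

Definition cl2_conj a : Cl2 R := fun i => if val i == 0%N then a i else - a i.
Definition cl2_add a b : Cl2 R := fun i => a i + b i.

Definition Hf a := c0 a ^+ 2 - c1 a ^+ 2 - c2 a ^+ 2 + c3 a ^+ 2.
Definition Gf a := c1 a ^+ 2 + c2 a ^+ 2 - c3 a ^+ 2.


Definition Lmx a : 'M[R]_4 :=
  let a0 := c0 a in let a1 := c1 a in let a2 := c2 a in let a3 := c3 a in
  \matrix_(i < 4, j < 4)
   nth 0 (nth [::] [:: [:: a0; a1; a2; -a3];
                       [:: a1; a0; a3; -a2];
                       [:: a2; -a3; a0; a1];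
                       [:: a3; -a2; a1; a0]] i) j.

Definition Rmx a : 'M[R]_4 :=
  let a0 := c0 a in let a1 := c1 a in let a2 := c2 a in let a3 := c3 a in
  \matrix_(i < 4, j < 4)
   nth 0 (nth [::] [:: [:: a0; a1; a2; -a3];
                       [:: a1; a0; -a3; a2];
                       [:: a2; a3; a0; -a1];
                       [:: a3; a2; -a1; a0]] i) j.

Definition Umx : 'M[R]_4 :=
  \matrix_(i < 4, j < 4) (if i == j then (if val i == 0%N then 1 else -1) else 0).

Definition Wmx a b : 'M[R]_4 := Lmx a - Rmx b *m Umx.

Definition rsqrtC (x : R) : R[i] :=
  if 0 <= x then real_complex R (Num.sqrt x) else Complex 0 (Num.sqrt (- x)).

End Cl2Defs.

(* Main.v *)
Require Import Defs.
From HB Require Import structures.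
From mathcomp Require Import all_boot all_order all_algebra.
From mathcomp Require Import complex.
From mathcomp Require Import ring.
Import Order.TTheory GRing.Theory Num.Theory.
Local Open Scope ring_scope.

Lemma det4 (T : comRingType) (x00 x01 x02 x03 x10 x11 x12 x13 x20 x21 x22 x23 x30 x31 x32 x33 : T) :
  \det (\matrix_(i < 4, j < 4)
   nth 0 (nth [::] [:: [:: x00; x01; x02; x03];
                       [:: x10; x11; x12; x13];
                       [:: x20; x21; x22; x23];
                       [:: x30; x31; x32; x33]] i) j : 'M[T]_4) =
  0 + x00 * x11 * x22 * x33 - x00 * x11 * x23 * x32 - x00 * x12 * x21 * x33 + x00 * x12 * x23 * x31 + x00 * x13 * x21 * x32 - x00 * x13 * x22 * x31 - x01 * x10 * x22 * x33 + x01 * x10 * x23 * x32 + x01 * x12 * x20 * x33 - x01 * x12 * x23 * x30 - x01 * x13 * x20 * x32 + x01 * x13 * x22 * x30 + x02 * x10 * x21 * x33 - x02 * x10 * x23 * x31 - x02 * x11 * x20 * x33 + x02 * x11 * x23 * x30 + x02 * x13 * x20 * x31 - x02 * x13 * x21 * x30 - x03 * x10 * x21 * x32 + x03 * x10 * x22 * x31 + x03 * x11 * x20 * x32 - x03 * x11 * x22 * x30 - x03 * x12 * x20 * x31 + x03 * x12 * x21 * x30.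
Proof.
rewrite (expand_det_row _ ord0) !big_ord_recl big_ord0 /cofactor.
rewrite !(expand_det_row _ ord0) !big_ord_recl !big_ord0 /cofactor.
rewrite !(expand_det_row _ ord0) !big_ord_recl !big_ord0 /cofactor.
rewrite !det_mx11 !mxE /=.
ring.
Qed.
Lemma rsqrtC_sq (R : rcfType) (x : R) : rsqrtC x * rsqrtC x = real_complex R x.
Proof.
rewrite /rsqrtC; case: ifP => hx.
  by rewrite -rmorphM -expr2 sqr_sqrtr.
have hx' : 0 <= - x by rewrite oppr_ge0; apply: ltW; rewrite ltNge hx.
apply/eqP; rewrite eq_complex /= !mulr0 !mul0r -expr2 sqr_sqrtr // sub0r opprK add0r !eqxx.
by []. Qed.

Lemma charW (R : rcfType) (a b : Cl2 R) (rc := real_complex R) :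
  char_poly_mx (map_mx rc (Wmx a b)) =
  \matrix_(i < 4, j < 4)
   nth 0 (nth [::] [:: [:: 'X - (rc (c0 a - c0 b))%:P; - (rc (c1 a + c1 b))%:P; - (rc (c2 a + c2 b))%:P; - (rc (-c3 a - c3 b))%:P];
                       [:: - (rc (c1 a - c1 b))%:P; 'X - (rc (c0 a + c0 b))%:P; - (rc (c3 a - c3 b))%:P; - (rc (-c2 a + c2 b))%:P];
                       [:: - (rc (c2 a - c2 b))%:P; - (rc (-c3 a + c3 b))%:P; 'X - (rc (c0 a + c0 b))%:P; - (rc (c1 a - c1 b))%:P];
                       [:: - (rc (c3 a - c3 b))%:P; - (rc (-c2 a + c2 b))%:P; - (rc (c1 a - c1 b))%:P; 'X - (rc (c0 a + c0 b))%:P]] i) j.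
Proof.
apply/matrixP=> i j; rewrite /char_poly_mx !mxE.
case: i j => [[|[|[|[|?]]]] ?] [[|[|[|[|?]]]] ?] //=.
all: rewrite ?mulr1n ?mulr0n ?sub0r //.
all: rewrite /Wmx ?mxE ?big_ord_recl ?big_ord0 ?mxE /=.

all: match goal with |- _ = 'X - _ => congr (_ - polyC (rc _)) | _ => congr (- polyC (rc _)) end; ring.
Qed.
Lemma Wmx_E (R : rcfType) (a b : Cl2 R) : Wmx a b =
  \matrix_(i < 4, j < 4)
   nth 0 (nth [::] [:: [:: c0 a - c0 b; c1 a + c1 b; c2 a + c2 b; -c3 a - c3 b];
                       [:: c1 a - c1 b; c0 a + c0 b; c3 a - c3 b; -c2 a + c2 b];
                       [:: c2 a - c2 b; -c3 a + c3 b; c0 a + c0 b; c1 a - c1 b];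
                       [:: c3 a - c3 b; -c2 a + c2 b; c1 a - c1 b; c0 a + c0 b]] i) j.
Proof.
apply/matrixP=> i j; rewrite !mxE !big_ord_recl big_ord0 !mxE.
case: i j => [[|[|[|[|?]]]] ?] [[|[|[|[|?]]]] ?] //=; ring.
Qed.

Theorem proposition5p7 (R : rcfType) (a b : Cl2 R) :
  cl2_nonzero a -> cl2_nonzero b ->
  let s1 := rsqrtC (Gf a + Hf b) in
  let s2 := rsqrtC (Gf a + Gf b
                    + 2 * (- (c1 a * c1 b) - c2 a * c2 b + c3 a * c3 b)) in
  let lam1 := real_complex R (c0 a) + s1 in
  let lam2 := real_complex R (c0 a) - s1 in
  let lam3 := real_complex R (c0 a + c0 b) + s2 in
  let lam4 := real_complex R (c0 a + c0 b) - s2 in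
  char_poly (map_mx (real_complex R) (Wmx a b))
    = \prod_(l <- [:: lam1; lam2; lam3; lam4]) ('X - l%:P)
  /\ \det (Wmx a b)
       = (Hf a - Hf b)
         * (Hf a + Hf b + 2 * (c0 a * c0 b + c1 a * c1 b + c2 a * c2 b - c3 a * c3 b))
  /\ \det (Wmx a b) = (Hf a - Hf b) * Hf (cl2_add (cl2_conj a) b).
Proof.
move=> _ _ s1 s2 lam1 lam2 lam3 lam4.
have hdet : \det (Wmx a b) = (Hf a - Hf b)
         * (Hf a + Hf b + 2 * (c0 a * c0 b + c1 a * c1 b + c2 a * c2 b - c3 a * c3 b)).
  by rewrite Wmx_E det4 /Hf; ring.
split; [| split] => //; last first.
  by rewrite hdet /Hf /c0 /c1 /c2 /c3 /cl2_add /cl2_conj /=; ring.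
have E : forall x s : R[i], ('X - (x + s)%:P) * ('X - (x - s)%:P)
   = ('X - x%:P)^+2 - (s*s)%:P.
  by move=> x s; rewrite polyCD polyCB polyCM; ring.
rewrite /char_poly charW det4 !big_cons big_nil mulr1 mulrA /lam1 /lam2 /lam3 /lam4.
rewrite E -mulrA E /s1 /s2 !rsqrtC_sq /Gf /Hf.
rewrite ?rmorphD ?rmorphB ?rmorphN ?rmorphM ?rmorphXn ?rmorph_nat.
ring.
Qed.
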